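(* Let $\{G_i\}$ be a family of connected graphs with common induced subgraph $J$, embedded as $J_i\subseteq G_i$, such that $\{(G_i|J_i)\}$ is isometric, and let $H=\amalg\{(G_i|J_i)\}$. Let $uv\in Solv(J_i:G_i)$ with $d(u,J)<d(v,J)$, and let $c\in V(J)$ with $d(u,c)=d(u,J)$. Then $c$ distinguishes $uv$. Moreover, if for some $j\neq i$ there exists $s\in V(G_j)$ with $d(s,c)=d(s,J)$, then $s$ distinguishes $uv$.
   Context: All distances $d$ are shortest-path distances in $H$, and $d(x,J)=\min_{w\in V(J)}d(x,w)$. A vertex $w$ distinguishes an edge $uv$ if $d(w,u)\neq d(w,v)$. $J$ is a common induced subgraph of each $G_i$ via injective maps $\iota_i:V(J)\to V(G_i)$ with $\iota_i(x)\iota_i(y)\in E(G_i)$ iff $xy\in E(J)$; $J_i$ is the induced image, $x^i=\iota_i(x)$. $H=\amalg\{(G_i|J_i)\}$ is obtained from the disjoint union of the $G_i$ by identifying, for each $x\in V(J)$, all $x^i$ into one vertex; $G_i$ and $J$ are regarded as subgraphs of $H$. The family is isometric if $d_{G_i}(a^i,b^i)=d_{G_j}(a^j,b^j)$ for all $i,j$, $a,b\in V(J)$. $Solv(J_i:G_i)$ is the set of edges $uv$ of $G_i$ with $d(u,J)\neq d(v,J)$. *)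

(* Defs.v *)
From mathcomp Require Import all_boot.
Set Implicit Arguments. Unset Strict Implicit. Unset Printing Implicit Defensive.

Definition walkn (T : finType) (e : rel T) (n : nat) (x y : T) : bool :=
  [exists p : n.-tuple T, path e x p && (last x p == y)].

(* Shortest-path distance: the least n <= #|T| admitting a walk of length n
   (equals #|T| only when y is unreachable from x). *)
Definition dist (T : finType) (e : rel T) (x y : T) : nat :=
  find (fun n => walkn e n x y) (iota 0 #|T|).

Definition connected_graph (T : finType) (e : rel T) : Prop :=
  forall x y : T, connect e x y.

Definition simple_graph (T : finType) (e : rel T) : Prop :=
  symmetric e /\ irreflexive e.

Section Amalgam.
Variables (I : finType) (V : I -> finType) (e : forall i, rel (V i)).
Variables (VJ : finType) (eJ : rel VJ) (iota : forall i, VJ -> V i).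

Definition induced_embedding (i : I) : Prop :=
  injective (iota i) /\ forall a b : VJ, e (iota i a) (iota i b) = eJ a b.

Definition isometric_family : Prop :=
  forall (i j : I) (a b : VJ),
    dist (@e i) (iota i a) (iota i b) = dist (@e j) (iota j a) (iota j b).

(* Vertices of H = amalgam: the vertices of J, plus for each i the vertices
   of G_i outside J_i. *)
Definition outside (i : I) := {y : V i | y \notin codom (iota i)}.
Definition HV : finType := (VJ + {i : I & outside i})%type.

(* The canonical image in H of a vertex of G_i (x^i is identified with x). *)
Definition emb (i : I) (x : V i) : HV :=
  match (x \in codom (iota i)) as b return (x \in codom (iota i)) = b -> HV with
  | true => fun h => inl (iinv h)
  | false => fun h => inr (Tagged outside (exist _ x (negbT h) : outside i))
  end erefl.

Definition hedge : rel HV := fun a b =>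
  [exists i : I, exists x : V i, exists y : V i,
     [&& emb x == a, emb y == b & e x y]].

Definition dH (a b : HV) : nat := dist hedge a b.

Definition dHJ (a : HV) : nat := \big[minn/#|HV|]_(w : VJ) dH a (inl w).

Definition distinguishes (w a b : HV) : bool := dH w a != dH w b.

Definition Solv (i : I) (u v : V i) : bool :=
  e u v && (dHJ (emb u) != dHJ (emb v)).

End Amalgam.

Arguments hedge {I V} e {VJ} iota a b.
Arguments dH {I V} e {VJ} iota a b.
Arguments dHJ {I V} e {VJ} iota a.
Arguments distinguishes {I V} e {VJ} iota w a b.
Arguments Solv {I V} e {VJ} iota {i} u v.
Arguments emb {I V VJ} iota {i} x.

(* Main.v *)
Require Import Defs.
From mathcomp Require Import all_boot.
Set Implicit Arguments. Unset Strict Implicit. Unset Printing Implicit Defensive.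

Section DistGen.
Variables (T : finType) (e : rel T).

Definition walk (n : nat) (x y : T) : Prop :=
  exists p : seq T, [/\ size p = n, path e x p & last x p = y].

Lemma walknP n x y : reflect (walk n x y) (walkn e n x y).
Proof.
apply: (iffP existsP).
  by case=> t /andP[Hp /eqP Hl]; exists (val t); rewrite size_tuple.
case=> p [Hs Hp Hl].
have Hs' : size p == n by rewrite Hs.
by exists (Tuple Hs'); rewrite /= Hp Hl eqxx.
Qed.

Lemma dist_le n x y : walk n x y -> dist e x y <= n.
Proof.
move=> /walknP W; rewrite /dist.
case: (ltnP n #|T|) => Hn.
  rewrite leqNgt; apply/negP => /(before_find 0).
  by rewrite nth_iota // add0n W.
by apply: leq_trans (find_size _ _) _; rewrite size_iota.
Qed.

Lemma dist_walk x y : dist e x y < #|T| -> walk (dist e x y) x y.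
Proof.
move=> H; apply/walknP.
have Hh : has (fun n => walkn e n x y) (iota 0 #|T|) by rewrite has_find size_iota.
by have := nth_find 0 Hh; rewrite nth_iota ?add0n // -(size_iota 0 #|T|) -has_find.
Qed.

Lemma dist_conn x y : connect e x y -> dist e x y < #|T|.
Proof.
case/connectP=> p Hp ->; case: (shortenP Hp) => p' Hp' Hu _.
apply: (leq_ltn_trans (dist_le (n := size p') _)).
  by exists p'.
have := max_card (mem (x :: p')); rewrite (card_uniqP Hu) //.
Qed.

Lemma dist_le_card x y : dist e x y <= #|T|.
Proof. by rewrite /dist; apply: leq_trans (find_size _ _) _; rewrite size_iota. Qed.

Lemma walk_cat n1 n2 x y z : walk n1 x y -> walk n2 y z -> walk (n1 + n2) x z.
Proof.
case=> p [<- Hp Hl]; case=> q [<- Hq Hl'].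
by exists (p ++ q); rewrite size_cat cat_path last_cat Hl Hp Hq Hl'.
Qed.

Lemma walk0 x : walk 0 x x.
Proof. by exists [::]. Qed.

Lemma dist_xx x : dist e x x = 0.
Proof. by apply/eqP; rewrite -leqn0; apply: dist_le; apply: walk0. Qed.

Hypothesis esym : symmetric e.

Lemma walk_sym n x y : walk n x y -> walk n y x.
Proof.
case=> p [Hs Hp Hl]; exists (rev (belast x p)); split.
- by rewrite size_rev size_belast.
- rewrite -Hl rev_path; rewrite (eq_path (e' := e)) // => a b; exact: esym.
- have : last x (rev (x :: p)) = x.
    by rewrite rev_cons last_rcons.
  by rewrite lastI rev_rcons /= Hl.
Qed.

Lemma dist_sym x y : dist e x y = dist e y x.
Proof.
rewrite /dist; apply: eq_find => n.
by apply/idP/idP => /walknP/walk_sym/walknP.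
Qed.

End DistGen.

Section Am.
Variables (I : finType) (V : I -> finType) (e : forall i, rel (V i)).
Variables (VJ : finType) (iota : forall i, VJ -> V i).

Definition htag (a : HV iota) : option I :=
  match a with inl _ => None | inr t => Some (tag t) end.

Lemma emb_spec i (x : V i) : (exists h, emb iota x = inl (@iinv _ _ (iota i) (mem VJ) x h)) \/
   (exists h, emb iota x = inr (Tagged (outside iota) (exist _ x h : outside iota i))).
Proof.
have K : forall b (h : (x \in codom (iota i)) = b),
  let z := (match b as b0 return ((x \in codom (iota i)) = b0 -> HV iota) with
    | true => fun h => inl (iinv h)
    | false => fun h => inr (Tagged (outside iota) (exist _ x (negbT h) : outside iota i)) end h) in
  (exists h, z = inl (@iinv _ _ (iota i) (mem VJ) x h)) \/
   (exists h, z = inr (Tagged (outside iota) (exist _ x h : outside iota i))).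
  by case=> h; [left; exists h | right; exists (negbT h)].
exact: (K _ erefl).
Qed.

Lemma emb_tag i (x : V i) : htag (emb iota x) = None \/ htag (emb iota x) = Some i.
Proof. by case: (emb_spec x) => -[h ->]; [left | right]. Qed.

Lemma emb_iota i w : injective (iota i) -> emb iota (iota i w) = inl w.
Proof.
move=> Hi; case: (emb_spec (iota i w)) => -[h ->].
  by congr inl; apply: Hi; rewrite f_iinv.
by have := h; rewrite codom_f.
Qed.

Lemma hedge_tag a b : hedge e iota a b ->
  htag a = None \/ htag b = None \/ htag a = htag b.
Proof.
case/existsP=> k /existsP[x /existsP[y /and3P[/eqP <- /eqP <- _]]].
case: (emb_tag x) => ->; first by left.
case: (emb_tag y) => ->; [by right; left | by right; right].
Qed.

Lemma hedge_emb i (x y : V i) : e x y -> hedge e iota (emb iota x) (emb iota y).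
Proof.
by move=> H; apply/existsP; exists i; apply/existsP; exists x; apply/existsP; exists y;
  rewrite !eqxx H.
Qed.

Lemma connect_emb i (x y : V i) : connect (@e i) x y ->
  connect (hedge e iota) (emb iota x) (emb iota y).
Proof.
case/connectP=> p Hp ->; apply/connectP; exists (map (emb iota) p).
  elim: p x Hp => //= z p IH x /andP[H1 H2]; rewrite hedge_emb //=; exact: IH.
by rewrite last_map.
Qed.

Lemma hedge_sym : (forall i, symmetric (@e i)) -> symmetric (hedge e iota).
Proof.
move=> Hs a b; apply/idP/idP;
case/existsP=> k /existsP[x /existsP[y /and3P[/eqP <- /eqP <- H]]];
by apply: hedge_emb; rewrite Hs.
Qed.

Lemma cross i n x y : walk (hedge e iota) n x y -> htag x != Some i -> htag y = Some i ->
  exists w n1 n2, [/\ n1 + n2 = n, walk (hedge e iota) n1 x (inl w)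
                    & walk (hedge e iota) n2 (inl w) y].
Proof.
case=> p [<- Hp Hl]; elim: p x Hp Hl => [|z p IH] x /=.
  by move=> _ -> /eqP H /H.
case/andP=> Hxz Hp Hl Hx Hy.
case: x Hxz Hx => [w | t] Hxz Hx.
  exists w, 0, (size p).+1; split => //; first exact: walk0.
  by exists (z :: p); rewrite /= Hxz Hp Hl.
have Hz : htag z != Some i.
  case: (hedge_tag Hxz) => [//|[-> //|<- //]].
case: (IH z Hp Hl Hz Hy) => w [n1 [n2 [Hn W1 W2]]].
exists w, n1.+1, n2; split => //; first by rewrite addSn Hn.
have W0 : walk (hedge e iota) 1 (inr t) z by exists [:: z]; rewrite /= Hxz.
exact: (walk_cat W0 W1).
Qed.

End Am.
Unset Implicit Arguments. Set Strict Implicit. Set Printing Implicit Defensive.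

Theorem lemma11 (I : finType) (V : I -> finType) (e : forall i, rel (V i))
  (VJ : finType) (eJ : rel VJ) (iota : forall i, VJ -> V i)
  (Hsimple : forall i, simple_graph (@e i))
  (Hconn : forall i, connected_graph (@e i))
  (Hind : forall i, induced_embedding e eJ iota i)
  (Hiso : isometric_family e iota)
  (i : I) (u v : V i)
  (Huv : Solv e iota u v)
  (Hlt : dHJ e iota (emb iota u) < dHJ e iota (emb iota v))
  (c : VJ)
  (Hc : dH e iota (emb iota u) (inl c) = dHJ e iota (emb iota u)) :
  distinguishes e iota (inl c) (emb iota u) (emb iota v) /\
  (forall (j : I), j != i -> forall s : V j,
     dH e iota (emb iota s) (inl c) = dHJ e iota (emb iota s) ->
     distinguishes e iota (emb iota s) (emb iota u) (emb iota v)).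
Proof.
have Hsym : symmetric (hedge e iota).
  by apply: hedge_sym => k; case: (Hsimple k).
have dsym : forall a b, dH e iota a b = dH e iota b a.
  by move=> a b; rewrite /dH dist_sym.
have dHJle : forall a w, dHJ e iota a <= dH e iota a (inl w).
  move=> a w; rewrite /dHJ.
  have : w \in index_enum VJ by rewrite mem_index_enum.
  elim: (index_enum VJ) => // b r IH; rewrite inE big_cons.
  case/orP=> [/eqP ->|/IH H]; first exact: geq_minl.
  exact: leq_trans (geq_minr _ _) H.
have Hvc := dHJle (emb iota v) c.
split.
  rewrite /distinguishes dsym Hc (dsym _ (emb iota v)).
  by rewrite ltn_eqF // (leq_trans Hlt Hvc).
move=> j Hj s Hs.
have inj : forall k, injective (iota k) by move=> k; case: (Hind k).
have Csc : connect (hedge e iota) (emb iota s) (inl c).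
  by rewrite -(emb_iota _ (inj j)); apply: (connect_emb iota); apply: Hconn.
have Ccu : connect (hedge e iota) (inl c) (emb iota u).
  by rewrite -(emb_iota _ (inj i)); apply: (connect_emb iota); apply: Hconn.
have Ccv : connect (hedge e iota) (inl c) (emb iota v).
  by rewrite -(emb_iota _ (inj i)); apply: (connect_emb iota); apply: Hconn.
have Htv : htag (emb iota v) = Some i.
  case: (emb_tag iota v) => // Hn; exfalso.
  move: Hn Hlt; case: (emb iota v) => [w|//] _.
  by have := dHJle (inl w) w; rewrite /dH dist_xx leqn0 => /eqP ->.
have Hts : htag (emb iota s) != Some i.
  by case: (emb_tag iota s) => -> //; apply/eqP; case=> E; rewrite E eqxx in Hj.
have W := dist_walk (dist_conn (connect_trans Csc Ccv)).
case: (cross W Hts Htv) => w [n1 [n2 [Hn W1 W2]]].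
have L1 := dist_le W1; have L2 := dist_le W2.
have Wsc := dist_walk (dist_conn Csc).
have Wcu := dist_walk (dist_conn Ccu).
have U := dist_le (walk_cat Wsc Wcu).
have L3 := dHJle (emb iota s) w.
have L4 := dHJle (emb iota v) w.
rewrite /distinguishes neq_ltn; apply/orP; left.
apply: (leq_ltn_trans U).
move: Hs Hc; rewrite /dH => Hs Hc'.
rewrite Hs (dist_sym Hsym (inl c)) Hc' -Hn.
apply: (@leq_trans (dHJ e iota (emb iota s) + dHJ e iota (emb iota v))).
  by rewrite ltn_add2l.
apply: leq_add; first exact: leq_trans L3 L1.
by apply: (leq_trans L4); rewrite /dH dist_sym.
Qed.
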